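(* Let $G$ be a non-complete double-critical $k$-chromatic graph. For every vertex $x\in V(G)$, the minimum degree of the neighbourhood graph $G_x$ is at least $k-2$, i.e. $\delta(G_x)\ge k-2$.
   Context: All graphs are finite and simple. A graph $G$ is (vertex-)critical if $\chi(G-v)<\chi(G)$ for every vertex $v\in V(G)$. A critical graph $G$ is double-critical if $\chi(G-x-y)\le\chi(G)-2$ for every edge $xy\in E(G)$. For a vertex $x$, $G_x:=G[N(x)]$ denotes the subgraph induced by the (open) neighbourhood of $x$. *)

(* Defs.v *)
From mathcomp Require Import all_boot.
Set Implicit Arguments. Unset Strict Implicit. Unset Printing Implicit Defensive.

Definition simple_graph (T : finType) (e : rel T) : Prop :=
  symmetric e /\ irreflexive e.

(* The (x != y) guard only matters for non-irreflexive e (never the case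
   for a simple graph); it makes chromatic numbers always defined. *)
Definition colorable (T : finType) (e : rel T) (A : {set T}) (k : nat) : bool :=
  [exists f : {ffun T -> 'I_k},
     [forall x in A, forall y in A, (x != y) && e x y ==> (f x != f y)]].

Lemma colorable_exists (T : finType) (e : rel T) (A : {set T}) :
  exists k, colorable e A k.
Proof.
exists #|T|; apply/existsP; exists [ffun x => enum_rank x].
apply/forallP=> x; apply/implyP=> _; apply/forallP=> y; apply/implyP=> _.
apply/implyP=> /andP [nxy _]; rewrite !ffunE; apply: contra nxy.
by move/eqP/enum_rank_inj=> ->.
Qed.

Definition chi (T : finType) (e : rel T) (A : {set T}) : nat :=
  ex_minn (colorable_exists e A).

Definition nbhd (T : finType) (e : rel T) (x : T) : {set T} := [set y | e x y].

Definition critical (T : finType) (e : rel T) : Prop :=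
  forall v : T, chi e ([set: T] :\ v) < chi e [set: T].

Definition double_critical (T : finType) (e : rel T) : Prop :=
  critical e /\
  forall x y : T, e x y -> chi e ([set: T] :\ x :\ y) <= chi e [set: T] - 2.

Definition complete (T : finType) (e : rel T) : Prop :=
  forall x y : T, x != y -> e x y.

(* Main.v *)
Require Import Defs.
From mathcomp Require Import all_boot zify.
Set Implicit Arguments. Unset Strict Implicit. Unset Printing Implicit Defensive.

Lemma chi_min (T : finType) (e : rel T) A n : colorable e A n -> chi e A <= n.
Proof. rewrite /chi; case: ex_minnP => m _ H /H; by []. Qed.

Lemma chi_col (T : finType) (e : rel T) A : colorable e A (chi e A).
Proof. rewrite /chi; by case: ex_minnP. Qed.

Lemma col_mono (T : finType) (e : rel T) A m n :
  colorable e A m -> m <= n -> colorable e A n.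
Proof.
move=> /existsP [f /forallP Hf] mn; apply/existsP.
exists [ffun v => widen_ord mn (f v)].
apply/forallP=> u; apply/implyP=> uA; apply/forallP=> v; apply/implyP=> vA.
apply/implyP=> H; rewrite !ffunE.
have := (implyP (forallP (implyP (Hf u) uA) v) vA) => /implyP /(_ H).
by apply: contra => /eqP [] /val_inj ->.
Qed.

Theorem proposition6 (T : finType) (e : rel T) (k : nat) :
  simple_graph e ->
  ~ complete e ->
  double_critical e ->
  chi e [set: T] = k ->
  forall x y : T, y \in nbhd e x ->
    k - 2 <= #|nbhd e x :&: nbhd e y|.
Proof.
move=> [esym eirr] _ [_ Hdc] Hk x y; rewrite inE => exy.
case: (leqP k 1) => k2; first by rewrite (_ : k - 2 = 0) //; apply/eqP; rewrite subn_eq0 (leq_trans k2).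
set m := k - 2.
have col : colorable e ([set: T] :\ x :\ y) m.
  by apply: col_mono (chi_col _ _) _; rewrite /m -Hk; apply: Hdc.
case/existsP: col => f /forallP Hf.
have Pf : forall u v, u \in [set: T] :\ x :\ y -> v \in [set: T] :\ x :\ y ->
   u != v -> e u v -> f u != f v.
  move=> u v uA vA nuv euv.
  by have := (implyP (forallP (implyP (Hf u) uA) v) vA) => /implyP; apply; rewrite nuv euv.
set S := nbhd e x :&: nbhd e y.
have SA : forall z, z \in S -> z \in [set: T] :\ x :\ y.
  move=> z; rewrite !inE => /andP [exz eyz].
  apply/and3P; split => //; apply: contraTneq isT => ?; subst z.
  - by rewrite eirr in eyz.
  - by rewrite eirr in exz.
have Hc : forall c : 'I_m, [exists z in S, f z == c].
  move=> c; case: (boolP [exists z in S, f z == c]) => // Hn; exfalso.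
  pose g := [ffun v => if v == x then ord_max
                     else if v == y then widen_ord (leqnSn m) c
                     else if e y v && (f v == c) then ord_max
                     else widen_ord (leqnSn m) (f v)].
  have : colorable e [set: T] m.+1.
    apply/existsP; exists g.
    apply/forallP=> u; apply/implyP=> _; apply/forallP=> v; apply/implyP=> _.
    apply/implyP=> /andP [nuv euv]; rewrite !ffunE.
    have notS : forall z, e x z -> e y z -> f z != c.
      move=> z exz eyz; apply/negP => /eqP fz; move/negP: Hn; apply; apply/existsP; exists z.
      by rewrite !inE exz eyz fz eqxx.
    have neqmax : forall i : 'I_m, (widen_ord (leqnSn m) i == ord_max) = false.
      by move=> i; apply/negbTE; rewrite -val_eqE /= neq_ltn ltn_ord.
    have neqw : forall i j : 'I_m, (widen_ord (leqnSn m) i == widen_ord (leqnSn m) j) = (i == j).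
      by move=> i j; rewrite -!val_eqE.
    case: (eqVneq u x) => [ux|ux]; case: (eqVneq v x) => [vx|vx].
    - by subst; rewrite eqxx in nuv.
    - subst u; case: (eqVneq v y) => [_|vy]; first by rewrite eq_sym neqmax.
      case: ifP => [/andP [eyv fv]|_]; last by rewrite eq_sym neqmax.
      by have := notS _ euv eyv; rewrite fv.
    - subst v; case: (eqVneq u y) => [_|uy]; first by rewrite neqmax.
      case: ifP => [/andP [eyu fu]|_]; last by rewrite neqmax.
      by rewrite esym in euv; have := notS _ euv eyu; rewrite fu.
    - have uA : u \in [set: T] :\ x :\ y -> True by [].
      case: (eqVneq u y) => [uy|uy]; case: (eqVneq v y) => [vy|vy].
      + by subst; rewrite eqxx in nuv.
      + subst u; rewrite euv /=; case: ifP => [_|fv]; first by rewrite neqmax.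
        by rewrite neqw eq_sym fv.
      + subst v; rewrite esym in euv; rewrite euv /=; case: ifP => [_|fu]; first by rewrite eq_sym neqmax.
        by rewrite neqw fu.
      + have uA' : u \in [set: T] :\ x :\ y by rewrite !inE uy ux.
        have vA' : v \in [set: T] :\ x :\ y by rewrite !inE vy vx.
        move: (Pf _ _ uA' vA' nuv euv) => Hfuv.
        case: ifP => [/andP [_ /eqP fu]|_]; case: ifP => [/andP [_ /eqP fv]|_].
        * by rewrite fu fv eqxx in Hfuv.
        * by rewrite eq_sym neqmax.
        * by rewrite neqmax.
        * by rewrite neqw.
  move/chi_min; rewrite Hk /m; move: k2; clear; lia.
have sub : [set: 'I_m] \subset f @: S.
  apply/subsetP => c _; have /existsP [z /andP [zS /eqP <-]] := Hc c.
  by apply: imset_f.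
have := subset_leq_card sub; rewrite cardsT card_ord => H.
exact: leq_trans H (leq_imset_card _ _).
Qed.
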